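(* Let $\Omega$ be an infinite locally compact metric space, $T:\Omega\to\Omega$ continuous, and $\nu$ a nonzero Radon measure on $(\Omega,\mathcal{B}(\Omega))$. If the dynamical system $(\Omega,T)$ is chaotic with respect to $\nu$, then it is topologically transitive.
   Context: $(\Omega,T)$ is chaotic with respect to $\nu$ if for $\nu$-almost every $x_0\in\Omega$ and every nonempty open $U\subset\Omega$ there is $n\in\mathbb{N}$ with $T^n(x_0)\in U$. $(\Omega,T)$ is topologically transitive if for all nonempty open sets $U,V\subset\Omega$ there exists $n\ge0$ with $T^{-n}(U)\cap V\neq\emptyset$. *)

(* Defs.v *)
From HB Require Import structures.
From mathcomp Require Import all_boot all_order all_algebra.
From mathcomp Require Import all_classical all_reals all_analysis.
Set Implicit Arguments. Unset Strict Implicit. Unset Printing Implicit Defensive.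
Import Order.TTheory GRing.Theory Num.Theory.
Local Open Scope classical_set_scope.
Local Open Scope ring_scope.

(* A metric space with a distinguished point (needed only because
   MathComp-Analysis' measurable types are pointed; harmless here since the
   spaces considered are infinite, hence nonempty). *)
#[short(type="pmetricType")]
HB.structure Definition PointedMetric (K : numDomainType) :=
  { M of Pointed M & Metric K M }.

Definition Borel (T : ptopologicalType) := g_sigma_algebraType (@open T).

Definition radon_measure (R : realType) (T : ptopologicalType)
    (nu : {measure set (Borel T) -> \bar R}) : Prop :=
  [/\ (forall K : set T, compact K -> (nu K < +oo)%E),
      (forall A : set (Borel T), measurable A ->
         nu A = ereal_inf [set nu (U : set (Borel T)) | U in
                             [set U : set T | open U /\ A `<=` U]]) &
      (forall U : set T, open U ->
         nu U = ereal_sup [set nu (K : set (Borel T)) | K in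
                             [set K : set T | compact K /\ K `<=` U]])].

(* (Omega, f) is chaotic w.r.t. nu: for nu-a.e. x0, every nonempty open U
   is visited by T^n x0 for some n in N = {1, 2, ...}. *)
Definition chaotic_wrt (R : realType) (T : ptopologicalType) (f : T -> T)
    (nu : {measure set (Borel T) -> \bar R}) : Prop :=
  {ae nu, forall x0 : Borel T, forall U : set T, open U -> U !=set0 ->
            exists n : nat, U (iter n.+1 f x0)}.

Definition topologically_transitive (T : topologicalType) (f : T -> T) : Prop :=
  forall U V : set T, open U -> open V -> U !=set0 -> V !=set0 ->
    exists n : nat, (iter n f @^-1` U) `&` V !=set0.

(* Main.v *)
Require Import Defs.
From HB Require Import structures.
From mathcomp Require Import all_boot all_order all_algebra.
From mathcomp Require Import all_classical all_reals all_analysis.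
Import Order.TTheory GRing.Theory Num.Theory.
Local Open Scope classical_set_scope.
Local Open Scope ring_scope.

Section Aux.
Variables (R : realType) (Omega : pmetricType R) (f : Omega -> Omega).
Hypothesis fc : continuous f.

Lemma iter_cont n : continuous (iter n f).
Proof.
elim: n => [|n IH] x /=; first exact: cvg_id.
exact: (continuous_comp (IH x) (fc _)).
Qed.

Lemma fin_closed (A : set Omega) : finite_set A -> closed A.
Proof.
move: A; apply/accessible_finite_set_closed.
apply: hausdorff_accessible; exact: metric_hausdorff.
Qed.

Lemma open_set1 (U : set Omega) p : open U -> U p -> finite_set U -> open [set p].
Proof.
move=> oU Up fU.
have -> : [set p] = U `&` ~` (U `\` [set p]).
  apply/seteqP; split => [x -> /=|x [Ux nx]]; first by split => // -[].
  by apply: contrapT => xp; apply: nx; split.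
apply: openI => //; apply: closed_openC; apply: fin_closed.
exact: sub_finite_set fU; by move=> x [].
Qed.

Variable x0 : Omega.
Let O k := iter k.+1 f x0.
Hypothesis good : forall U : set Omega, open U -> U !=set0 ->
  exists n : nat, U (O n).

Let S m := [set O k | k in `I_m].

Lemma finS m : finite_set (S m).
Proof. exact: finite_image (finite_II m). Qed.

Lemma notin_S m n : ~ S m (O n) -> (m <= n)%N.
Proof. by move=> h; rewrite leqNgt; apply/negP => lt; apply: h; exists n. Qed.

Lemma sub_S (U : set Omega) m : open U ->
  (forall n, U (O n) -> (n < m)%N) -> U `<=` S m.
Proof.
move=> oU hm x Ux; apply: contrapT => nS.
have o1 : open (U `\` S m).
  apply: openI => //; apply: closed_openC; apply: fin_closed; exact: finS.
have ne : U `\` S m !=set0 by exists x.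
have [n [Un nSn]] := good _ o1 ne.
by apply: nSn; exists n => //; exact: hm.
Qed.

Lemma OD a b : iter a.+1 f (O b) = O (a + b).+1.
Proof. by rewrite /O -iterD addSn addnS. Qed.

Lemma unbounded (U : set Omega) m : open U -> U !=set0 ->
  exists n, (m <= n)%N /\ U (O n).
Proof.
move=> oU [q Uq]; apply: contrapT => hno.
have hm : forall n, U (O n) -> (n < m)%N.
  move=> n Un; rewrite ltnNge; apply/negP => mn; apply: hno; by exists n.
have US := sub_S _ _ oU hm.
have [a am Oa] := US q Uq.
have op : open [set q].
  apply: (open_set1 _ _ oU Uq); exact: sub_finite_set US (finS m).
pose N := iter a.+1 f @^-1` [set q].
have oN : open N.
  by move: (iter_cont a.+1) => /continuousP; apply; exact: (open_set1 _ _ oU Uq (sub_finite_set US (finS m))).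
have Nx0 : N x0 by exact: Oa.
have hN : forall n, N (O n) -> (n < m)%N.
  move=> n Nn; have : U (O (a + n).+1) by rewrite -OD; move: Nn; rewrite /N /= => ->.
  move/hm => h; apply: leq_ltn_trans h; rewrite -addSn; exact: leq_addl.
have NS := sub_S _ _ oN hN.
have ox : open [set x0].
  apply: (open_set1 _ _ oN Nx0); exact: sub_finite_set NS (finS m).
have nx : [set x0] !=set0 by exists x0.
have [n Onx] := good _ ox nx.
have per0 : forall t, iter (t * n.+1) f x0 = x0.
  elim => [|t IH] //; rewrite mulSn iterD IH; exact: Onx.
have : U (O (a + m * n.+1)).
  by rewrite /O -addSn iterD per0 -/(O a) Oa.
move/hm; rewrite ltnNge => /negP; apply.
by rewrite mulnS addnCA leq_addr.
Qed.
End Aux.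

Theorem mainTheorem4 (R : realType) (Omega : pmetricType R) (f : Omega -> Omega)
    (nu : {measure set (Borel Omega) -> \bar R}) :
  ~ finite_set [set: Omega] ->
  locally_compact [set: Omega] ->
  continuous f ->
  radon_measure nu ->
  (exists A : set (Borel Omega), measurable A /\ nu A <> 0%E) ->
  chaotic_wrt f nu ->
  topologically_transitive f.
Proof.
move=> _ _ fc _ [A [mA nA]] ch.
have [x0 gx] : exists x0 : Omega, forall U : set Omega, open U -> U !=set0 ->
    exists n : nat, U (iter n.+1 f x0).
  apply: contrapT => hno; case: ch => N [mN N0 sub].
  apply: nA; apply/eqP; rewrite eq_le measure_ge0 andbT -N0.
  apply: le_measure; rewrite ?inE //.
  move=> x Ax; apply: sub => /= gx; apply: hno; by exists x.
move=> U V oU oV nU nV.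
have [b Vb] := gx V oV nV.
have [n [bn Un]] := @unbounded _ _ _ fc _ gx U b oU nU.
exists (n - b)%N; exists (iter b.+1 f x0); split => //=.
have -> : iter (n - b) f (f (iter b f x0)) = iter n.+1 f x0 by rewrite -[f (iter b f x0)]/(iter b.+1 f x0) -iterD addnS subnK.
exact: Un.
Qed.
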